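(* There is an absolute constant $C>0$ such that the following holds. Let $E \subset \mathbb{R}^2$ be compact with $\mathcal{S}^1(E) < \infty$, let $\mu$ be the one-dimensional spherical measure $\mathcal{S}^1$ restricted to $E$, and let $\sigma$ be normalised arclength measure on $S^1$. Then for every $\mu\times\sigma$-measurable set $A \subset E \times S^1$ we have $\mathrm{Fav}(A) \le C\,(\mu\times\sigma)(A)$.
   Context: For $E \subset \mathbb{R}^2$, $\mathcal{S}^1(E) = \lim_{r_+\to 0}\inf\sum_{B\in\mathcal{B}}\mathrm{diam}(B)$, the infimum over at most countable covers $\mathcal{B}$ of $E$ by open balls of radius at most $r_+$ (one-dimensional spherical measure). $\sigma$ is arclength measure on $S^1$ normalised to have total mass $1$, and $m$ is Lebesgue measure on $\mathbb{R}$. For $(c,\omega)\in\mathbb{R}\times S^1$ let $l_{c,\omega}=\{x\in\mathbb{R}^2 : x\cdot\omega = c\}$. For $A \subset \mathbb{R}^2\times S^1$, the Favard length is $\mathrm{Fav}(A) = (m\times\sigma)(\{(c,\omega)\in\mathbb{R}\times S^1 : (l_{c,\omega}\times\{\omega\})\cap A \ne \emptyset\})$. *)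

(* Defs.v *)
From HB Require Import structures.
From mathcomp Require Import all_boot all_order all_algebra.
From mathcomp Require Import all_classical all_reals all_analysis.
Set Implicit Arguments. Unset Strict Implicit. Unset Printing Implicit Defensive.
Import Order.TTheory GRing.Theory Num.Theory.
Import numFieldNormedType.Exports.
Local Open Scope classical_set_scope.
Local Open Scope ring_scope.

Section Defs.
Context {R : realType}.

Definition pt := (R * R)%type.

Definition edist (x y : pt) : R :=
  Num.sqrt ((x.1 - y.1) ^+ 2 + (x.2 - y.2) ^+ 2).

Definition oball (x : pt) (r : R) : set pt := [set y | edist x y < r].

Definition diam (S : set pt) : \bar R :=
  ereal_sup [set (edist p.1 p.2)%:E | p in S `*` S].

(* An at most countable family of open balls is encoded as a sequence of
   optional (center, radius) pairs; [None] means "no ball". *)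
Definition ball_of (b : option (pt * R)) : set pt :=
  if b is Some (c, r) then oball c r else set0.

Definition ball_diam (b : option (pt * R)) : \bar R :=
  if b is Some (c, r) then diam (oball c r) else 0%E.

Definition ball_covers (E : set pt) (rp : R) : set (nat -> option (pt * R)) :=
  [set F | (forall i c r, F i = Some (c, r) -> 0 < r <= rp) /\
           E `<=` \bigcup_i ball_of (F i)].

Definition S1_delta (E : set pt) (rp : R) : \bar R :=
  ereal_inf [set (\sum_(i <oo) ball_diam (F i))%E | F in ball_covers E rp].

Definition S1 (E : set pt) : \bar R := lim (S1_delta E r @[r --> 0^'+]).

Definition dot (x w : pt) : R := x.1 * w.1 + x.2 * w.2.

Definition circle : set pt := [set w | w.1 ^+ 2 + w.2 ^+ 2 = 1].

(* normalised arclength (outer) measure on S^1, via the angle parametrisation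
   theta |-> (cos theta, sin theta), theta in [0, 2 pi); the value of
   [lebesgue_measure] on an arbitrary set is the Lebesgue outer measure. *)
Definition sigma (B : set pt) : \bar R :=
  (lebesgue_measure [set t : R | (0 <= t < 2 * pi)%R /\ B (cos t, sin t)]
    * ((2 * pi)^-1)%:E)%E.

(* product outer measure (Federer 2.6.1): infimum of sum mu(A_i) nu(B_i)
   over countable covers by rectangles A_i x B_i with A_i mu-measurable and
   B_i nu-measurable (Caratheodory). *)
Definition prod_outer {X Y : Type} (mu : set X -> \bar R) (nu : set Y -> \bar R)
  (S : set (X * Y)) : \bar R :=
  ereal_inf [set (\sum_(i <oo) (mu (F i).1 * nu (F i).2))%E |
     F in [set F : nat -> set X * set Y |
             (forall i, mu.-caratheodory (F i).1 /\ nu.-caratheodory (F i).2) /\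
             S `<=` \bigcup_i ((F i).1 `*` (F i).2)]].

Definition S1_restr (E : set pt) (B : set pt) : \bar R := S1 (B `&` E).

Definition line (c : R) (w : pt) : set pt := [set x | dot x w = c].

Definition Fav (A : set (pt * pt)) : \bar R :=
  prod_outer (@lebesgue_measure R) sigma
    [set cw : R * pt | circle cw.2 /\
       exists x, line cw.1 cw.2 x /\ A (x, cw.2)].

End Defs.

(* Main.v *)
Require Import Defs.
From HB Require Import structures.
From mathcomp Require Import all_boot all_order all_algebra.
From mathcomp Require Import all_classical all_reals all_analysis.
Import Order.TTheory GRing.Theory Num.Theory.
Import numFieldNormedType.Exports.
Local Open Scope classical_set_scope.
Local Open Scope ring_scope.
From mathcomp Require Import lra zify ring.
Section GenOuter.
Context {R : realType} {K T : Type} (good : K -> Prop) (w : K -> \bar R) (sh : K -> set T).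
Hypothesis w_ge0 : forall k, good k -> (0 <= w k)%E.
Local Open Scope ereal_scope.
Definition gcovers (S : set T) := [set F : nat -> K | (forall i, good (F i)) /\ S `<=` \bigcup_i sh (F i)].
Definition gout (S : set T) := ereal_inf [set \sum_(i <oo) w (F i) | F in gcovers S].

Lemma gout_ge0 S : 0 <= gout S.
Proof.
apply: le_ereal_inf_tmp => x [F [gF _] <-]; apply: nneseries_ge0 => i _ _; exact: w_ge0.
Qed.

Lemma gout_le S F : gcovers S F -> gout S <= \sum_(i <oo) w (F i).
Proof. by move=> cF; apply: ereal_inf_lbound; exists F. Qed.

Lemma le_gout S S' : S `<=` S' -> gout S <= gout S'.
Proof.
move=> SS; apply/ereal_inf_le_tmp => x [F [gF cF] <-].
by exists F => //; split => //; apply: subset_trans SS cF.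
Qed.

Lemma gout_sub (A : nat -> set T) : gout (\bigcup_n A n) <= \sum_(n <oo) gout (A n).
Proof.
have [[i ioo]|] := pselect (exists i, gout (A i) = +oo).
  rewrite (eseries_pinfty _ _ ioo) ?leey// => n _.
  by rewrite -ltNye (lt_le_trans _ (gout_ge0 _)).
rewrite -forallNE => Aoo.
suff add2e (e : {posnum R}) :
    gout (\bigcup_n A n) <= \sum_(i <oo) gout (A i) + e%:num%:E.
  by apply/lee_addgt0Pr => _/posnumP[].
rewrite (le_trans _ (epsilon_trick _ _ _))//; last first.
  by move=> n; exact: gout_ge0.
pose P n (B : nat -> K) := gcovers (A n) B /\
  \sum_(k <oo) w (B k) <= gout (A n) + (e%:num / (2 ^ n.+1)%:R)%:E.
have [G PG] : {G : (nat -> K)^nat & forall n, P n (G n)}.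
  apply: (@choice _ _ P) => n; rewrite /P /gout.
  set S := (X in ereal_inf X); move infS : (ereal_inf S) => iS.
  case: iS infS => [r Sr|Soo|Soo].
  - have en1 : (0 < e%:num / (2 ^ n.+1)%:R)%R by [].
    have /(lb_ereal_inf_adherent en1) : ereal_inf S \is a fin_num by rewrite Sr.
    move=> [x [B [mB AnB] muBx] xS].
    by exists B; split => //; rewrite muBx -Sr; exact/ltW.
  - by have := Aoo n; rewrite /gout Soo.
  - suff : lbound S 0 by move/le_ereal_inf_tmp; rewrite Soo.
    by move=> /= _ [B [mB AnB] <-]; apply: nneseries_ge0 => i _ _; exact: w_ge0.
have muG_ge0 x : 0 <= (w \o uncurry G) x.
  by case: x => a b; apply: w_ge0; exact: (PG a).1.1.
apply: (@le_trans _ _ (\esum_(i in setT) (w \o uncurry G) i)).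
  rewrite /gout; apply: ereal_inf_lbound => /=.
  have /card_esym/ppcard_eqP[f] := card_nat2.
  exists (uncurry G \o f).
    split => [i|]; first by rewrite /=; case: (f i) => a b; exact: (PG a).1.1.
    apply: (@subset_trans _  (\bigcup_n \bigcup_k sh (G n k))) => [t [i _]|].
      by move=> /((PG i).1.2) -[j _ ?]; exists i => //; exists j.
    move=> t [i _ [j _ Bijt]]; exists (f^-1%FUN (i, j)) => //=.
    by rewrite invK ?inE.
  rewrite -(esum_pred_image (w \o uncurry G) _ xpredT) ?[fun=> _]set_true//.
  by rewrite image_eq.
rewrite (_ : esum _ _ = \sum_(i <oo) \sum_(j <oo ) w (G i j)); last first.
  pose J : nat -> set (nat * nat) := fun i => [set (i, j) | j in setT].
  rewrite (_ : setT = \bigcup_k J k); last first.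
    by rewrite predeqE => -[a b]; split => // _; exists a => //; exists b.
  rewrite esum_bigcupT /=; last 2 first.
    - apply/trivIsetP => i j _ _ ij.
      rewrite predeqE => -[n m] /=; split => //= -[] [_] _ [<-{n} _].
      by move=> [m' _] [] /esym/eqP; rewrite (negbTE ij).
    - by move=> /= [n m]; exact: (muG_ge0 (n, m)).
  rewrite -(image_id [set: nat]) -fun_true esum_pred_image//; last first.
    by move=> n _; apply: esum_ge0 => -[a b] _; exact: (muG_ge0 (a, b)).
  apply: eq_eseriesr => /= j _.
  rewrite -(esum_pred_image (w \o uncurry G) (pair j) predT)//=; last first.
    by move=> ? ? _ _; exact: (@can_inj _ _ _ snd).
  - by move=> n _; exact: (muG_ge0 (j, n)).
  by congr esum; rewrite predeqE => -[a b]; split; move=> [i _ <-]; exists i.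
  apply: lee_nneseries => n _.
  by move=> _; apply: nneseries_ge0 => m _ _; exact: (muG_ge0 (n, m)).
exact: (PG n).2.
Qed.
End GenOuter.
Section S1props.
Variable R : realType.
Local Open Scope ereal_scope.
Implicit Types E : set (@pt R).

Lemma edist_ge0 (x y : @pt R) : (0 <= Defs.edist x y)%R.
Proof. exact: sqrtr_ge0. Qed.

Lemma diam_ball_ge0 (c : @pt R) (r : R) : (0 < r)%R -> 0 <= diam (oball c r).
Proof.
move=> r0; apply: le_ereal_sup_tmp; exists (Defs.edist c c)%:E; last by rewrite lee_fin edist_ge0.
exists (c, c) => //; split => /=; rewrite /oball /Defs.edist /= ?subrr ?expr0n /= ?addr0 ?sqrtr0 //.
Qed.

Lemma S1_delta_ge0 E r : 0 <= S1_delta E r.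
Proof.
apply: le_ereal_inf_tmp => x [F [Fr _] <-]; apply: nneseries_ge0 => i _ _.
case E1: (F i) => [[c s]|] //=; apply: diam_ball_ge0.
by have /andP[] := Fr _ _ _ E1.
Qed.

Lemma S1_delta_anti E r s : (r <= s)%R -> S1_delta E s <= S1_delta E r.
Proof.
move=> rs; apply: ereal_inf_le_tmp => x [F [Fr FE] <-]; exists F => //; split => // i c t /Fr.
by case/andP => -> /le_trans; apply.
Qed.

Lemma S1E E : S1 E = ereal_sup (S1_delta E @` [set` Interval (BRight 0%R) (BLeft 2%R)]).
Proof.
apply: cvg_lim => //; apply: nonincreasing_at_right_cvge; first by rewrite bnd_simp.
by move=> x y _ _ xy; apply: S1_delta_anti.
Qed.

Lemma S1_delta_le_S1 E : S1_delta E 1 <= S1 E.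
Proof.
rewrite S1E; apply: ereal_sup_ubound; exists 1%R => //=.
by rewrite in_itv /= ltr01 ltr1n.
Qed.

Lemma S1_ge0 E : 0 <= S1 E.
Proof. exact: le_trans (S1_delta_ge0 _ _) (S1_delta_le_S1 _). Qed.
End S1props.
Section Sigma.
Variable R : realType.
Local Open Scope ereal_scope.
Definition Thp (C : set (@pt R)) : set R := [set t | C (cos t, sin t)].
Definition Iv : set R := [set t | (0 <= t < 2 * pi)%R].
Definition kk : R := (2 * pi)^-1.
Lemma kk_gt0 : (0 < kk)%R.
Proof. by rewrite /kk invr_gt0 mulr_gt0 // pi_gt0. Qed.

Lemma sigmaE (X : set (@pt R)) : sigma X = lebesgue_measure (Iv `&` Thp X) * kk%:E.
Proof. by []. Qed.

Lemma sigma0 : sigma (set0 : set (@pt R)) = 0.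
Proof.
rewrite sigmaE (_ : Iv `&` Thp set0 = set0) ?measure0 ?mul0e //.
by apply/seteqP; split => x //= [].
Qed.

Lemma sigma_ge0 (X : set (@pt R)) : 0 <= sigma X.
Proof. by rewrite sigmaE mule_ge0 // lee_fin ltW // kk_gt0. Qed.

Lemma le_sigma : {homo (@sigma R) : A B / A `<=` B >-> A <= B}.
Proof.
move=> A B AB; rewrite !sigmaE lee_wpmul2r //; first by rewrite lee_fin ltW // kk_gt0.
by apply: le_outer_measure => t [? /AB]; split.
Qed.

Lemma sigma_sub : sigma_subadditive (@sigma R).
Proof.
move=> F; rewrite sigmaE.
rewrite (eq_eseriesr (fun n _ => sigmaE (F n))).
under eq_eseriesr do rewrite muleC.
rewrite nneseriesZl; last by move=> n _; exact: measure_ge0.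
rewrite [X in _ <= X]muleC lee_wpmul2r //; first by rewrite lee_fin ltW // kk_gt0.
apply: (le_trans _ (outer_measure_sigma_subadditive (@lebesgue_measure R) (fun n => Iv `&` Thp (F n)))).
by apply: le_outer_measure => t [It [n _ Fn]]; exists n.
Qed.

HB.instance Definition _ := isOuterMeasure.Build R (@pt R) (@sigma R)
  sigma0 sigma_ge0 le_sigma sigma_sub.

Lemma sigma_car_pre (C : set (@pt R)) : measurable (Thp C) -> (@sigma R).-caratheodory C.
Proof.
move=> mC X; rewrite !sigmaE -ge0_muleDl ?measure_ge0 //.
have h : (@lebesgue_measure R).-caratheodory (Thp C).
  by have := @sub_caratheodory _ _ _ (@wlength R idfun) (Thp C); apply.
congr (_ * _); rewrite (h (Iv `&` Thp X)).
congr (_ + _); congr (lebesgue_measure _); apply/seteqP; split => t /=; rewrite /Thp /=; tauto.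
Qed.

Lemma sigma_part (Q : set (@pt R)) (C : nat -> set (@pt R)) :
  (forall n, measurable (Thp (C n))) -> trivIset setT (fun n => Thp (C n)) ->
  \sum_(n <oo) sigma (Q `&` C n) <= sigma Q.
Proof.
move=> mC tC.
rewrite (eq_eseriesr (fun n _ => sigmaE (Q `&` C n))).
under eq_eseriesr do rewrite muleC.
rewrite nneseriesZl; last by move=> n _; exact: measure_ge0.
rewrite sigmaE [X in _ <= X]muleC lee_wpmul2l //; first by rewrite lee_fin ltW // kk_gt0.
have hC n : (@lebesgue_measure R).-caratheodory (Thp (C n)).
  by have := @sub_caratheodory _ _ _ (@wlength R idfun) (Thp (C n)); apply; exact: mC.
have := @caratheodory_lime_le R _ (@lebesgue_measure R) (fun n => Thp (C n)) hC tC (Iv `&` Thp Q).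
apply: le_trans; rewrite -[X in X <= _]adde0 leeD ?measure_ge0 //.
apply: lee_nneseries => n _; first by move=> _; exact: measure_ge0.
by apply: (le_outer_measure (@lebesgue_measure R)) => t /= [? []].
Qed.
End Sigma.
Arguments Thp {R}. Arguments Iv {R}. Arguments kk {R}.
Section K. Variable R : realType.
Lemma pb1 (v a r : R) : -r < v -> v < r -> -2 <= a -> a <= 1 -> - (2*r) <= v * a <= 2 * r.
Proof. by move=> *; apply/andP; split; nra. Qed.
Lemma key (x1 x2 c1 c2 w1 w2 a1 a2 M d r : R): 0 <= M -> 0 < d -> M*d <= r -> d <= 1 -> `|x1| <= M -> `|x2| <= M -> a1 <= w1 < a1 + d -> a2 <= w2 < a2+d -> w1^+2 + w2^+2 = 1 -> (x1-c1)^+2 + (x2-c2)^+2 < r^+2 -> 0 < r ->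
 c1*a1 + c2*a2 - 6*r <= x1*w1 + x2*w2 <= c1*a1+c2*a2 + 6*r.
Proof.
move=> M0 d0 Mdr d1 /ler_normlP hx1 /ler_normlP hx2 /andP[h1 h1'] /andP[h2 h2'] hw hc r0.
case: hx1 => ? ?; case: hx2 => ? ?.
have hw1 : -1 <= w1 <= 1 by apply/andP; split; nra.
have hw2 : -1 <= w2 <= 1 by apply/andP; split; nra.
have s1 : (x1 - c1)^+2 < r^+2.
  by move: hc; set v := x1 - c1; set u := x2 - c2 => hc; nra.
have s2 : (x2 - c2)^+2 < r^+2.
  by move: hc; set v := x1 - c1; set u := x2 - c2 => hc; nra.
have hv1 : -r < x1 - c1 < r.
  by move: s1; set v := x1 - c1 => s1; apply/andP; split; nra.
have hv2 : -r < x2 - c2 < r.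
  by move: s2; set v := x2 - c2 => s2; apply/andP; split; nra.
case/andP: hw1 => ? ?; case/andP: hw2 => ? ?; case/andP: hv1 => ? ?; case/andP: hv2 => ? ?.
have e1 : - (M*d) <= x1 * (w1 - a1) <= M * d.
  have : 0 <= w1 - a1 < d by apply/andP; split; lra.
  case/andP; set u := w1 - a1 => u0 ud; apply/andP; split; nra.
have e2 : - (M*d) <= x2 * (w2 - a2) <= M * d.
  have : 0 <= w2 - a2 < d by apply/andP; split; lra.
  case/andP; set u := w2 - a2 => u0 ud; apply/andP; split; nra.
have ha1 : -2 <= a1 <= 1 by apply/andP; split; lra.
have ha2 : -2 <= a2 <= 1 by apply/andP; split; lra.
case/andP: ha1 => ? ?; case/andP: ha2 => ? ?.
have f1 : - (2*r) <= (x1 - c1) * a1 <= 2 * r.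
  by apply: pb1.
have f2 : - (2*r) <= (x2 - c2) * a2 <= 2 * r.
  by apply: pb1.
case/andP: e1 => ? ?; case/andP: e2 => ? ?; case/andP: f1 => ? ?; case/andP: f2 => ? ?.
apply/andP; split; lra.
Qed.
End K.
Arguments key {R}. Arguments pb1 {R}.
Section Cells.
Variable R : realType.
Definition cell (d : R) (z : int * int) : set (@pt R) :=
  [set w | (z.1%:~R * d <= w.1 < (z.1 + 1)%:~R * d) /\ (z.2%:~R * d <= w.2 < (z.2 + 1)%:~R * d)].
Definition cellN (d : R) (n : nat) : set (@pt R) :=
  if pickle_inv n is Some z then cell d z else set0.

Lemma meas_itv_cos (a b : R) : measurable [set t : R | a <= cos t < b].
Proof.
have := measurable_realfun.continuous_measurable_fun (@continuous_cos R) measurableT (measurable_itv `[a, b[).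
by rewrite setTI; congr measurable; apply/seteqP; split => t /=; rewrite in_itv.
Qed.
Lemma meas_itv_sin (a b : R) : measurable [set t : R | a <= sin t < b].
Proof.
have := measurable_realfun.continuous_measurable_fun (@continuous_sin R) measurableT (measurable_itv `[a, b[).
by rewrite setTI; congr measurable; apply/seteqP; split => t /=; rewrite in_itv.
Qed.

Lemma Thp_cellN_meas d n : measurable (Thp (cellN d n)).
Proof.
rewrite /cellN; case: (pickle_inv n) => [z|]; last first.
  by rewrite (_ : Thp set0 = set0) //; apply/seteqP; split => t.
rewrite (_ : Thp _ = [set t : R | z.1%:~R * d <= cos t < (z.1 + 1)%:~R * d] `&`
                     [set t : R | z.2%:~R * d <= sin t < (z.2 + 1)%:~R * d]).
  exact: measurableI (meas_itv_cos _ _) (meas_itv_sin _ _).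
by apply/seteqP; split => t.
Qed.

Lemma int_sq (d x : R) (i j : int) : 0 < d ->
  i%:~R * d <= x < (i + 1)%:~R * d -> j%:~R * d <= x < (j + 1)%:~R * d -> i = j.
Proof.
move=> d0 /andP[h1 h2] /andP[h3 h4].
have a : i%:~R < (j + 1)%:~R :> R by rewrite -(ltr_pM2r d0); exact: le_lt_trans h1 h4.
have b : j%:~R < (i + 1)%:~R :> R by rewrite -(ltr_pM2r d0); exact: le_lt_trans h3 h2.
rewrite ltr_int in a; rewrite ltr_int in b; lia.
Qed.

Lemma cellN_triv d : 0 < d -> trivIset setT (fun n => Thp (cellN d n)).
Proof.
move=> d0 n m _ _ [t]; rewrite /Thp /cellN /=.
case En: (pickle_inv n) => [z|]; case Em: (pickle_inv m) => [z'|];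
  try (by move=> [_ []]); try (by move=> [[] _]).
move=> [[h1 h2] [h3 h4]].
have e1 := @int_sq _ _ _ _ d0 h1 h3; have e2 := @int_sq _ _ _ _ d0 h2 h4.
have ezz : z = z' by case: z z' e1 e2 {En Em h1 h2 h3 h4} => ? ? [? ?] /= -> ->.
by have := @pickle_invK (int * int)%type n; have := @pickle_invK (int * int)%type m; rewrite En Em /= ezz => -> <-.
Qed.

Lemma cell_floor d (w : @pt R) : 0 < d ->
  cell d (Num.floor (w.1 / d), Num.floor (w.2 / d)) w.
Proof.
move=> d0; rewrite /cell /=.
have := floor_itv (w.1 / d); have := floor_itv (w.2 / d).
rewrite !ler_pdivlMr // !ltr_pdivrMr //.
Qed.
End Cells.
Arguments cell_floor {R}.
Arguments cell {R}. Arguments cellN {R}.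

Section Ball.
Variable R : realType.
Local Open Scope ereal_scope.
Definition FO := prod_outer (@lebesgue_measure R) (@sigma R).
Definition goodF (p : set R * set (@pt R)) :=
  (@lebesgue_measure R).-caratheodory p.1 /\ (@sigma R).-caratheodory p.2.
Definition wF (p : set R * set (@pt R)) := lebesgue_measure p.1 * sigma p.2.
Definition shF (p : set R * set (@pt R)) : set (R * @pt R) := p.1 `*` p.2.
Lemma FOE S : FO S = gout goodF wF shF S.
Proof. by []. Qed.
Lemma wF_ge0 p : goodF p -> 0 <= wF p.
Proof. by move=> _; rewrite /wF mule_ge0 // sigma_ge0. Qed.

Definition Tb (E Q : set (@pt R)) (c : @pt R) (r : R) : set (R * @pt R) :=
  [set cw | circle cw.2 /\ Q cw.2 /\ exists x, E x /\ oball c r x /\ dot x cw.2 = cw.1].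

Lemma leb_car (X : set R) : measurable X -> (@lebesgue_measure R).-caratheodory X.
Proof. move=> mX; have := @sub_caratheodory _ _ _ (@wlength R idfun) X; apply; exact: mX. Qed.

Lemma ball_bound (E Q : set (@pt R)) (M : R) (c : @pt R) (r : R) : (0 <= M)%R ->
  (forall x, E x -> (`|x.1| <= M)%R /\ (`|x.2| <= M)%R) -> (@sigma R).-caratheodory Q -> (0 < r)%R ->
  FO (Tb E Q c r) <= (12 * r)%:E * sigma Q.
Proof.
move=> M0 EM hQ r0.
pose d := (r / (M + r + 1))%R.
have d0 : (0 < d)%R by rewrite /d divr_gt0 //; lra.
have Md : (M * d <= r)%R.
  rewrite /d mulrA ler_pdivrMr; last by lra.
  nra.
have d1 : (d <= 1)%R by rewrite /d ler_pdivrMr; lra.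
pose g (z : int * int) : @pt R := (z.1%:~R * d, z.2%:~R * d)%R.
pose F (n : nat) : set R * set (@pt R) :=
  ((if pickle_inv n is Some z then [set` `[dot c (g z) - 6 * r, dot c (g z) + 6 * r]%R] else set0),
   Q `&` cellN d n).
have cov : gcovers goodF shF (Tb E Q c r) F.
  split.
    move=> n; split.
    - rewrite /F /=; case: (pickle_inv n) => [z|].
        apply: leb_car. exact: measurable_itv.
      apply: leb_car. exact: measurable0.
    - apply: (@caratheodory_measurable_setI R _ (@sigma R)) => //.
      apply: sigma_car_pre; exact: Thp_cellN_meas.
  move=> [cc w] [/= cw [Qw [x [Ex [bx dx]]]]].
  pose z := (Num.floor (w.1 / d), Num.floor (w.2 / d)).
  exists (pickle z); first by [].
  rewrite /shF /F /cellN /= pickleK_inv; split; last by split => //; exact: cell_floor.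
  rewrite /= in_itv /= -dx /dot /=.
  have := cell_floor d w d0; rewrite -/z /cell => -[h1 h2].
  have [hx1 hx2] := EM _ Ex.
  move: bx; rewrite /oball /= /Defs.edist => bx.
  have bx' : ((x.1 - c.1) ^+ 2 + (x.2 - c.2) ^+ 2 < r ^+ 2)%R.
    rewrite -(opprB c.1) -(opprB c.2) !sqrrN.
    by rewrite -ltr_sqrt ?exprn_gt0 // sqrtr_sqr ger0_norm ?ltW.
  move: cw; rewrite /circle => cw.
  move: h1 h2; rewrite !intrD !mulrDl !mul1r => h1 h2.
  have := key _ _ _ _ _ _ _ _ _ _ _ M0 d0 Md d1 hx1 hx2 h1 h2 cw bx' r0.
  by move=> /andP[? ?]; apply/andP; split; rewrite /dot /g /=; lra.
rewrite FOE; apply: (le_trans (@gout_le _ _ _ goodF wF shF _ F cov)).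
apply: (@le_trans _ _ (\sum_(i <oo) ((12 * r)%:E * sigma (Q `&` cellN d i)))).
  apply: lee_nneseries => n _; first by move=> _; apply: wF_ge0; exact: cov.1 n.
  rewrite /wF /F /=; apply: lee_wpmul2r; first exact: sigma_ge0.
  case: (pickle_inv n) => [z|]; last by rewrite measure0 lee_fin; lra.
  rewrite lebesgue_measure_itv /= lte_fin; case: ifP => _; last by rewrite lee_fin; lra.
  by rewrite -EFinD lee_fin; lra.
rewrite nneseriesZl; last by move=> *; exact: sigma_ge0.
apply: lee_wpmul2l; first by rewrite lee_fin; lra.
apply: sigma_part; [move=> n; exact: Thp_cellN_meas | exact: cellN_triv].
Qed.
End Ball.
Section K2. Variable R : realType.
Lemma compact_box (E : set (@pt R)) : compact E -> exists M, 0 <= M /\ forall x, E x -> `|x.1| <= M /\ `|x.2| <= M.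
Proof.
move=> /compact_bounded [M [_ HM]].
exists (`|M| + 1); split; first by rewrite addr_ge0.
move=> x Ex; have := HM (`|M| + 1) _ x Ex.
rewrite /= prod_normE ge_max => /(_ _)/andP[] //.
by apply: (le_lt_trans (ler_norm M)); rewrite ltrDl.
Qed.
End K2.
Section K3. Variable R : realType.
Local Open Scope ereal_scope.
Lemma diam_ball_ge (c : @pt R) (r : R) : (0 < r)%R -> (2 * r)%:E <= diam (oball c r).
Proof.
move=> r0; apply/lee_addgt0Pr => e e0.
pose t := Num.max (r - e / 4)%R (r / 2)%R.
have t0 : (0 < t)%R by rewrite lt_max; apply/orP; right; lra.
have tr : (t < r)%R by rewrite gt_max; apply/andP; split; lra.
have te : (2 * r <= 2 * t + e)%R.
  have : (r - e / 4 <= t)%R by rewrite le_max lexx.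
  lra.
have ed (a : R) : (0 <= a)%R -> Num.sqrt (a ^+ 2 + 0 ^+ 2) = a.
  by move=> a0; rewrite expr0n /= addr0 sqrtr_sqr ger0_norm.
apply: (@le_trans _ _ ((2 * t)%:E + e%:E)); first by rewrite -EFinD lee_fin.
rewrite leeD2r //; apply: ereal_sup_ubound.
exists ((c.1 + t, c.2), (c.1 - t, c.2))%R.
  split; rewrite /oball /Defs.edist /= subrr.
    rewrite (_ : c.1 - (c.1 + t) = - t)%R; last by lra.
    by rewrite sqrrN ed // ltW.
  rewrite (_ : c.1 - (c.1 - t) = t)%R; last by lra.
  by rewrite ed // ltW.
rewrite /Defs.edist /= subrr (_ : c.1 + t - (c.1 - t) = 2 * t)%R; last by lra.
by rewrite ed //; lra.
Qed.
End K3.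
Arguments compact_box {R}. Arguments diam_ball_ge {R}.
Arguments FO {R}. Arguments goodF {R}. Arguments wF {R}. Arguments shF {R}. Arguments Tb {R}. Arguments leb_car {R}. Arguments ball_bound {R}. Arguments FOE {R}. Arguments wF_ge0 {R}. Arguments S1_delta_le_S1 {R}. Arguments S1_ge0 {R}. Arguments S1_delta_ge0 {R}. Arguments diam_ball_ge0 {R}. Arguments sigmaE {R}. Arguments sigma_ge0 {R}. Arguments sigma_part {R}. Arguments sigma_car_pre {R}. Arguments kk_gt0 {R}. Arguments le_sigma {R}.
Section Final.
Variable R : realType.
Local Open Scope ereal_scope.

Lemma sigma_le1 (X : set (@pt R)) : sigma X <= 1.
Proof.
rewrite sigmaE; apply: (@le_trans _ _ (lebesgue_measure (@Iv R) * (@kk R)%:E)).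
  rewrite lee_wpmul2r //; first by rewrite lee_fin ltW // kk_gt0.
  by apply: (le_outer_measure (@lebesgue_measure R)) => t [].
have -> : (@Iv R) = [set` `[0%R, (2 * pi)%R[].
  by apply/seteqP; split => t; rewrite /Iv /= in_itv.
rewrite lebesgue_measure_itv /= lte_fin mulr_gt0 ?pi_gt0 // -EFinD -EFinM subr0.
rewrite /kk mulfV ?lee_fin //; apply: lt0r_neq0; rewrite mulr_gt0 ?pi_gt0 //.
Qed.

Lemma FO_set0 : FO (set0 : set (R * @pt R)) = 0.
Proof.
rewrite FOE; apply/eqP; rewrite eq_le (@gout_ge0 _ _ _ goodF wF shF wF_ge0) andbT.
apply: (le_trans (@gout_le _ _ _ goodF wF shF _ (fun _ => (set0, set0)) _)).
  split => //; move=> n; split; first by apply: leb_car; exact: measurable0.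
  exact: (@caratheodory_measurable_set0 R _ (@sigma R)).
rewrite (@eseries0 _ (fun _ => wF (set0, set0))) // => n _ _.
by rewrite /wF measure0 mul0e.
Qed.

Definition Trect (E P Q : set (@pt R)) : set (R * @pt R) :=
  [set cw | circle cw.2 /\ Q cw.2 /\ exists x, (P `&` E) x /\ dot x cw.2 = cw.1].

Lemma rect_bound (E P Q : set (@pt R)) (M : R) : (0 <= M)%R ->
  (forall x, E x -> (`|x.1| <= M)%R /\ (`|x.2| <= M)%R) -> (@sigma R).-caratheodory Q ->
  FO (Trect E P Q) <= 6%:E * (S1 (P `&` E) * sigma Q).
Proof.
move=> M0 EM hQ.
have sQ0 := sigma_ge0 Q; have sQ1 := sigma_le1 Q.
have sQfin : sigma Q \is a fin_num by rewrite ge0_fin_numE // (le_lt_trans sQ1) ?ltry.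
set s := fine (sigma Q).
have sE : sigma Q = s%:E by rewrite /s fineK.
have s0 : (0 <= s)%R by rewrite -lee_fin -sE.
have [s00|s0'] := eqVneq s 0%R.
  rewrite sE s00 mule0 mule0 FOE.
  apply: (le_trans (@gout_le _ _ _ goodF wF shF _ (fun n => if n is 0%N then (setT, Q) else (set0, set0)) _)).
    split.
      case => [|n]; split => //=.
      - by apply: leb_car; exact: measurableT.
      - by apply: leb_car; exact: measurable0.
      - exact: (@caratheodory_measurable_set0 R _ (@sigma R)).
    by move=> [cc w] [_ [Qw _]]; exists 0%N.
  rewrite (@eseries0 _ (fun n => wF (if n is 0%N then (setT, Q) else (set0, set0)))) // => n _ _.
  by case: n => [|n]; rewrite /wF /= ?sE ?s00 ?mule0 // measure0 mul0e.
have sgt0 : (0 < s)%R by rewrite lt0r s0' s0.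
have k0 : (0 < 6 * s)%R by rewrite mulr_gt0.
rewrite sE (muleC (S1 _)) muleA -EFinM.
apply: (le_trans _ (lee_wpmul2l _ (S1_delta_le_S1 (P `&` E)))); last by rewrite lee_fin ltW.
rewrite /S1_delta -ereal_inf_pZl //; apply: le_ereal_inf_tmp => _ [_ [B [Br BE] <-] <-].
pose Tbo (b : option (@pt R * R)) := if b is Some (c, r) then Tb (P `&` E) Q c r else set0.
have sub : Trect E P Q `<=` \bigcup_i Tbo (B i).
  move=> [cc w] [cw [Qw [x [PEx dx]]]].
  have [i _ bi] := BE x PEx; exists i => //.
  rewrite /Tbo; move: bi; case: (B i) => [[c r]|] //= bi.
  by split => //; split => //; exists x.
rewrite FOE; apply: (le_trans (@le_gout _ _ _ goodF wF shF _ _ sub)).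
apply: (le_trans (@gout_sub _ _ _ goodF wF shF wF_ge0 (fun i => Tbo (B i)))).
rewrite -nneseriesZl; last first.
  move=> i _; case E1: (B i) => [[c r]|] //=; apply: diam_ball_ge0.
  by have /andP[] := Br _ _ _ E1.
apply: lee_nneseries => i _; first by move=> _; exact: (@gout_ge0 _ _ _ goodF wF shF wF_ge0).
rewrite /Tbo; case E1: (B i) => [[c r]|] /=; last first.
  by rewrite -FOE FO_set0 mule0.
have /andP[r0 _] := Br _ _ _ E1.
rewrite -FOE; apply: (le_trans (ball_bound _ _ _ _ _ M0 _ hQ r0)).
  by move=> x [_ Ex]; exact: EM.
rewrite sE -EFinM (_ : (12 * r * s = (6 * s) * (2 * r))%R); last by ring.
rewrite EFinM; apply: lee_wpmul2l; first by rewrite lee_fin mulr_ge0.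
exact: diam_ball_ge.
Qed.
End Final.
Arguments Trect {R}. Arguments rect_bound {R}. Arguments FO_set0 {R}. Arguments sigma_le1 {R}.

Theorem lemma5p1 (R : realType) :
  exists C : R, 0 < C /\
  forall E : set (@pt R), compact E -> (S1 E < +oo)%E ->
  forall A : set (@pt R * @pt R), A `<=` E `*` circle ->
    (prod_outer (S1_restr E) sigma).-caratheodory A ->
    (Fav A <= C%:E * prod_outer (S1_restr E) sigma A)%E.
Proof.
exists 6; split => //.
move=> E cE _ A AE _.
have [M [M0 EM]] := compact_box E cE.
rewrite /prod_outer -ereal_inf_pZl //.
apply: le_ereal_inf_tmp => _ [_ [G [hG AG] <-] <-].
rewrite /Fav -/(FO _) FOE.
set FS := (X in gout _ _ _ X).
have sub : FS `<=` \bigcup_i Trect E (G i).1 (G i).2.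
  move=> [cc w] [cw [x [lx Axw]]].
  have [i _ [Gi1 Gi2]] := AG _ Axw.
  have [Ex _] := AE _ Axw.
  by exists i => //; split => //; split => //; exists x.
apply: (le_trans (@le_gout _ _ _ goodF wF shF _ _ sub)).
apply: (le_trans (@gout_sub _ _ _ goodF wF shF wF_ge0 _)).
rewrite -nneseriesZl; last by move=> i _; rewrite mule_ge0 // ?S1_ge0 ?sigma_ge0.
apply: lee_nneseries => i _; first by move=> _; exact: (@gout_ge0 _ _ _ goodF wF shF wF_ge0).
rewrite -FOE; exact: (rect_bound _ _ _ _ M0 EM (hG i).2).
Qed.
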